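(* Let $\lambda,\mu\in DP$ with $D_\mu\subseteq D_\lambda$. Then $c(T)\le c(T_{\lambda/\mu})$ in lexicographic order for all amenable tableaux $T$ of shape $D_{\lambda/\mu}$. Moreover, if $T$ is an amenable tableau of shape $D_{\lambda/\mu}$ with $c(T)=c(T_{\lambda/\mu})$, then $T^{(i)}=P_i(\lambda/\mu)$ for all $i$.
   Context: $DP$: partitions with distinct parts (including $\emptyset$). Shifted diagram $D_\lambda=\{(i,j):1\le i\le\ell(\lambda),\ i\le j\le i+\lambda_i-1\}$ (row $i$, column $j$); $D_{\lambda/\mu}=D_\lambda\setminus D_\mu$. Alphabet $\mathcal A=\{1'<1<2'<2<\cdots\}$, $|x|$ the unmarked version of a letter. A tableau of shape $D$ is $T:D\to\mathcal A$, weakly increasing along rows and down columns, each unmarked $k$ at most once per column, each marked $k'$ at most once per row; content $c(T)=(c_1,c_2,\dots)$, $c_i$ = number of entries $i$ or $i'$ (trailing zeros omitted). $T^{(i)}=\{(x,y):|T(x,y)|=i\}$. Reading word $w=w(T)=w_1\cdots w_n$: read rows left to right, from the bottom row to the top row. Statistics: $m_i(0)=0$; for $1\le j\le n$, $m_i(j)$ = number of letters $i$ in $w_{n-j+1}\cdots w_n$; for $n<j\le 2n$, $m_i(j)=m_i(n)+$ number of letters $i'$ in $w_1\cdots w_{j-n}$. For $k>1$, $w$ is $k$-amenable if: (a) for $0\le j\le n-1$, $m_k(j)=m_{k-1}(j)$ implies $w_{n-j}\notin\{k,k'\}$; (b) for $n\le j\le 2n-1$, $m_k(j)=m_{k-1}(j)$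 implies $w_{j-n+1}\notin\{k-1,k'\}$; (c) if $j$ is smallest with $w_j\in\{k',k\}$ then $w_j=k$; (d) if $j$ is smallest with $w_j\in\{(k-1)',k-1\}$ then $w_j=k-1$. $T$ is amenable if $w(T)$ is $k$-amenable for all $k>1$. The tableau $T_{\lambda/\mu}$: set $U_1=D_{\lambda/\mu}$; for $k=1,2,\dots$ let $P_k=\{(x,y)\in U_k:(x-1,y-1)\notin U_k\}$, set $T_{\lambda/\mu}(x,y)=k'$ if $(x+1,y)\in P_k$ and $=k$ otherwise for $(x,y)\in P_k$, and $U_{k+1}=U_k\setminus P_k$; write $P_k(\lambda/\mu)=P_k$. Lexicographic order on sequences: $\alpha\le\beta$ if $\alpha=\beta$ or there is $k$ with $\alpha_i=\beta_i$ for $i\le k$ and $\alpha_{k+1}<\beta_{k+1}$ (missing entries are $0$). *)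

(* Defs.v *)
From mathcomp Require Import all_boot.
Set Implicit Arguments. Unset Strict Implicit. Unset Printing Implicit Defensive.

(* Partitions with distinct parts: strictly decreasing seqs of positive nats. *)
Definition is_DP (lam : seq nat) : bool :=
  sorted (fun a b => b < a) lam && all (fun a => 0 < a) lam.

(* lambda_i, 1-indexed *)
Definition part (lam : seq nat) (i : nat) : nat := nth 0 lam i.-1.

(* Shifted diagram D_lambda, listed row by row (rows 1..l(lambda)),
   left to right in each row.  Cells are (row, column). *)
Definition shD (lam : seq nat) : seq (nat * nat) :=
  flatten [seq [seq (i, j) | j <- iota i (part lam i)] | i <- iota 1 (size lam)].

Definition skewD (lam mu : seq nat) : seq (nat * nat) :=
  [seq p <- shD lam | p \notin shD mu].

(* Letters of A = {1' < 1 < 2' < 2 < ...}: (k, false) is k, (k, true) is k'. *)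
Definition letter := (nat * bool)%type.
Definition rk (a : letter) : nat := a.1.*2 - a.2.

(* A tableau of shape D: a function defined on all cells (only its values on
   D matter). *)
Definition is_tableau (D : seq (nat * nat)) (T : nat * nat -> letter) : Prop :=
  [/\ (forall p, p \in D -> 0 < (T p).1),
      (forall x y y', (x, y) \in D -> (x, y') \in D -> y <= y' ->
         rk (T (x, y)) <= rk (T (x, y'))),
      (forall x x' y, (x, y) \in D -> (x', y) \in D -> x <= x' ->
         rk (T (x, y)) <= rk (T (x', y))),
      (forall x x' y k, (x, y) \in D -> (x', y) \in D ->
         T (x, y) = (k, false) -> T (x', y) = (k, false) -> x = x') &
      (forall x y y' k, (x, y) \in D -> (x, y') \in D ->
         T (x, y) = (k, true) -> T (x, y') = (k, true) -> y = y')].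

Definition content (D : seq (nat * nat)) (T : nat * nat -> letter) (i : nat) : nat :=
  count (fun p => (T p).1 == i) D.

Definition Tlevel (D : seq (nat * nat)) (T : nat * nat -> letter) (i : nat)
  (p : nat * nat) : bool := (p \in D) && ((T p).1 == i).

Definition reading (lam mu : seq nat) (T : nat * nat -> letter) : seq letter :=
  flatten [seq [seq T p | p <- skewD lam mu & p.1 == x] | x <- rev (iota 1 (size lam))].

Definition mstat (w : seq letter) (i j : nat) : nat :=
  let n := size w in
  if j <= n then count (pred1 (i, false)) (drop (n - j) w)
  else count (pred1 (i, false)) w + count (pred1 (i, true)) (take (j - n) w).

(* w_j, 1-indexed *)
Definition wl (w : seq letter) (j : nat) : letter := nth (0, false) w j.-1.

Definition k_amenable (k : nat) (w : seq letter) : Prop :=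
  let n := size w in
  [/\ (forall j, j <= n - 1 -> mstat w k j = mstat w k.-1 j ->
          (wl w (n - j)).1 != k),
      (forall j, n <= j <= 2 * n - 1 -> mstat w k j = mstat w k.-1 j ->
          wl w (j - n + 1) != (k.-1, false) /\ wl w (j - n + 1) != (k, true)),
      (forall j, 1 <= j <= n -> (wl w j).1 = k ->
          (forall j', 1 <= j' < j -> (wl w j').1 != k) -> wl w j = (k, false)) &
      (forall j, 1 <= j <= n -> (wl w j).1 = k.-1 ->
          (forall j', 1 <= j' < j -> (wl w j').1 != k.-1) -> wl w j = (k.-1, false))].

Definition amenable (lam mu : seq nat) (T : nat * nat -> letter) : Prop :=
  forall k, 1 < k -> k_amenable k (reading lam mu T).

(* The sets U_k and P_k.  Uset D k = U_{k+1} (so Uset D 0 = U_1 = D). *)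
Definition Pof (U : seq (nat * nat)) : seq (nat * nat) :=
  [seq p <- U | (p.1.-1, p.2.-1) \notin U].

Fixpoint Uset (D : seq (nat * nat)) (k : nat) : seq (nat * nat) :=
  match k with
  | 0 => D
  | k'.+1 => [seq p <- Uset D k' | p \notin Pof (Uset D k')]
  end.

(* P_k(lambda/mu), for k >= 1 *)
Definition Pk (lam mu : seq nat) (k : nat) : seq (nat * nat) :=
  Pof (Uset (skewD lam mu) k.-1).

(* The tableau T_{lambda/mu}: a cell p of D lies in P_k for a (unique) k with
   1 <= k <= |D| (each nonempty U_k loses at least one cell); then
   T(p) = k' if (x+1,y) in P_k and k otherwise.  Off D the value is junk. *)
Definition Tlm (lam mu : seq nat) (p : nat * nat) : letter :=
  match [seq k <- iota 1 (size (skewD lam mu)) | p \in Pk lam mu k] with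
  | k :: _ => (k, (p.1.+1, p.2) \in Pk lam mu k)
  | [::] => (0, false)
  end.

(* lexicographic order on sequences (indexed from 1, missing entries 0) *)
Definition lexle (a b : nat -> nat) : Prop :=
  (forall i, a i = b i) \/
  exists k, (forall i, 1 <= i <= k -> a i = b i) /\ a k.+1 < b k.+1.

(* Main.v *)
Require Import Defs.
From mathcomp Require Import all_boot zify.
From Stdlib Require Import Classical.

Lemma mem_shD lam i j :
  ((i, j) \in shD lam) = [&& 0 < i, i <= size lam, i <= j & j < i + part lam i].
Proof.
apply/flatten_mapP/idP.
- move=> [i' Hi' /mapP [j' Hj' [-> ->]]].
  move: Hi' Hj'; rewrite !mem_iota => /andP[a b] /andP[c d].
  apply/and4P; split => //; lia.
- move=> /and4P[a b c d]; exists i; first by rewrite mem_iota; lia.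
  apply/mapP; exists j => //; rewrite mem_iota; lia.
Qed.

Lemma mem_skewD lam mu p : (p \in skewD lam mu) = (p \in shD lam) && (p \notin shD mu).
Proof. by rewrite mem_filter andbC. Qed.

Lemma skewD_pos lam mu p : p \in skewD lam mu -> 0 < p.1.
Proof. case: p => i j; rewrite mem_skewD mem_shD => /andP[/and4P[]]//. Qed.

Lemma mid_cell lam mu x y : is_DP lam ->
  (x, y) \in skewD lam mu -> (x.-1, y.-1) \in skewD lam mu ->
  [/\ (x.-1, y) \in skewD lam mu, x.-1 < x & y.-1 < y].
Proof.
move=> /andP[Hs _]; rewrite !mem_skewD !mem_shD.
move=> /andP[/and4P[a b c d] nm] /andP[/and4P[a' b' c' d'] nm'].
have Hx : x.-1 < x by lia.
have Hy : y.-1 < y by lia.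
split => //; apply/andP; split.
- apply/and4P; split; try lia.
  have := (sortedP 0 Hs) (x.-2) ltac:(lia).
  rewrite /part in d d' *.
  have -> : x.-2.+1 = x.-1 by lia.
  lia.
- apply: contra nm' => /and4P[e f g h]; apply/and4P; split; lia.
Qed.

Lemma mem_Pof U p : (p \in Pof U) = (p \in U) && ((p.1.-1, p.2.-1) \notin U).
Proof. by rewrite mem_filter andbC. Qed.

Lemma mem_UsetS D k p :
  (p \in Uset D k.+1) = (p \in Uset D k) && (p \notin Pof (Uset D k)).
Proof. by rewrite /= mem_filter andbC. Qed.

Lemma Uset_mono D j k : j <= k -> {subset Uset D k <= Uset D j}.
Proof.
elim: k => [|k IH]; first by rewrite leqn0 => /eqP ->.
rewrite leq_eqVlt => /orP[/eqP -> //|]; rewrite ltnS => /IH H p.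
by rewrite mem_UsetS => /andP[/H].
Qed.

Lemma Uset_sub D k : {subset Uset D k <= D}.
Proof. by move=> p /(@Uset_mono D 0 k (leq0n k)). Qed.

Lemma diag_step lam mu T : is_DP lam -> is_tableau (skewD lam mu) T ->
  forall x y, (x, y) \in skewD lam mu -> (x.-1, y.-1) \in skewD lam mu ->
  (T (x.-1, y.-1)).1 < (T (x, y)).1.
Proof.
move=> Hl [Hpos Hrow Hcol Hun Hmk] x y Hp Hq.
have [Hr Hx Hy] := @mid_cell lam mu x y Hl Hp Hq.
have r1 := Hrow _ _ _ Hq Hr (leq_pred y).
have r2 := Hcol _ _ _ Hr Hp (leq_pred x).
have pa := Hpos _ Hq.
have Ua := Hun (x.-1) x y. have Ma := Hmk (x.-1) (y.-1) y.
move: r1 r2 pa Ua Ma; rewrite /rk.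
case: (T (x.-1, y.-1)) => ka ba; case: (T (x.-1, y)) => kb bb;
case: (T (x, y)) => kc bc /= r1 r2 pa Ua Ma.
rewrite ltnNge; apply/negP => Hle.
move: r1 r2 pa Ua Ma.
case: ba; case: bb; case: bc => /= r1 r2 pa Ua Ma; try lia.
- have e : kb = ka by lia. subst kb.
  have := Ma ka Hq Hr erefl erefl; lia.
- have e : kb = ka by lia. subst kb.
  have := Ma ka Hq Hr erefl erefl; lia.
- have e : kb = ka by lia. have e' : kc = ka by lia. subst kb kc.
  have := Ua ka Hr Hp erefl erefl; lia.
- have e : kb = ka by lia. have e' : kc = ka by lia. subst kb kc.
  have := Ua ka Hr Hp erefl erefl; lia.
Qed.

Lemma key lam mu T : is_DP lam -> is_tableau (skewD lam mu) T ->
  forall j p, p \in Uset (skewD lam mu) j -> j < (T p).1.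
Proof.
move=> Hl HT; have [Hpos _ _ _ _] := HT.
elim=> [|j IH] [x y].
  by move=> /Hpos.
rewrite mem_UsetS => /andP[Hp]; rewrite mem_Pof Hp /= => /negPn Hq.
have := IH _ Hq; have := @diag_step lam mu T Hl HT x y (@Uset_sub _ _ _ Hp) (@Uset_sub _ _ _ Hq).
simpl; lia.
Qed.

Lemma Pof_nonempty (U : seq (nat * nat)) p :
  (forall q, q \in U -> 0 < q.1) -> p \in U -> exists q, q \in Pof U.
Proof.
move=> Hpos; suff: forall n p, p.1 <= n -> p \in U -> exists q, q \in Pof U.
  by move=> H; apply: (H p.1).
move=> n; clear p; elim: n => [|n IH] p Hn Hp.
  by exfalso; have := Hpos _ Hp; move: Hn; simpl; lia.
case Hq: ((p.1.-1, p.2.-1) \in U).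
  apply: (IH _ _ Hq) => /=; have := Hpos _ Hp; move: Hn; case: p {Hp Hq} => a b /=; lia.
by exists p; rewrite mem_Pof Hp Hq.
Qed.

Lemma size_Uset D k : (forall q, q \in D -> 0 < q.1) -> size (Uset D k) <= size D - k.
Proof.
move=> Hpos; elim: k => [|k IH]; first by rewrite subn0.
have -> : Uset D k.+1 = [seq x <- Uset D k | x \notin Pof (Uset D k)] by [].
case E: (Uset D k) => [|p s].
  by [].
rewrite -E.
have Hp : p \in Uset D k by rewrite E mem_head.
have [q Hq] := @Pof_nonempty _ p (fun q H => Hpos q (@Uset_sub _ _ _ H)) Hp.
have Hq' : q \in Uset D k by move: Hq; rewrite mem_Pof => /andP[].
rewrite size_filter.
have H1 := count_predC (fun p => p \notin Pof (Uset D k)) (Uset D k).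
have H2 : 0 < count (predC (fun p => p \notin Pof (Uset D k))) (Uset D k).
  rewrite -has_count; apply/hasP; exists q => //=; by rewrite Hq.
move: IH H2; rewrite -H1; set a := count _ _; set b := count _ _; lia.
Qed.

Lemma Uset_cover D p : (forall q, q \in D -> 0 < q.1) -> p \in D ->
  exists2 j, j < size D & p \in Pof (Uset D j).
Proof.
move=> Hpos Hp.
have Hn : p \notin Uset D (size D).
  apply/negP => H; have := @size_Uset D (size D) Hpos.
  case E: (Uset D (size D)) => [|a s]; first by rewrite E in H.
  rewrite subnn.
  by [].
suff: forall n, p \notin Uset D n -> exists2 j, j < n & p \in Pof (Uset D j) by apply.
elim=> [|n IH]; first by rewrite /= Hp.
case H: (p \in Uset D n).
  move=> Hn'; exists n => //; move: Hn'; rewrite mem_UsetS H /=; exact: negPn.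
by move=> _; have [j ? ?] := IH (negbT H); exists j => //; lia.
Qed.

Lemma Pof_disj D a b p : p \in Pof (Uset D a) -> p \in Pof (Uset D b) -> a = b.
Proof.
wlog: a b / a <= b.
  move=> W Ha Hb; case: (leqP a b) => H; first exact: W.
  by symmetry; apply: W => //; lia.
rewrite leq_eqVlt => /orP[/eqP -> //|Hab] Ha Hb.
have : p \in Uset D a.+1.
  apply: (@Uset_mono D a.+1 b Hab); move: Hb; rewrite mem_Pof => /andP[] //.
by rewrite mem_UsetS Ha andbF.
Qed.

Lemma Tlm_eq lam mu j p : p \in Pof (Uset (skewD lam mu) j) -> (Tlm lam mu p).1 = j.+1.
Proof.
move=> Hp.
have Hpos : forall q, q \in skewD lam mu -> 0 < q.1 by move=> q; apply: skewD_pos.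
have Hj : j.+1 <= size (skewD lam mu).
  have := @size_Uset _ j Hpos.
  have : p \in Uset (skewD lam mu) j by move: Hp; rewrite mem_Pof => /andP[].
  case: (Uset _ j) => //= a s _; lia.
have Hin : j.+1 \in [seq k <- iota 1 (size (skewD lam mu)) | p \in Pk lam mu k].
  by rewrite mem_filter mem_iota /Pk /=; apply/andP; split => //; lia.
rewrite /Tlm; case E: [seq _ <- _ | _] => [|k s]; first by rewrite E in Hin.
have : k \in [seq k <- iota 1 (size (skewD lam mu)) | p \in Pk lam mu k] by rewrite E mem_head.
rewrite mem_filter mem_iota /Pk => /andP[Hk /andP[k1 _]] /=.
have := @Pof_disj _ _ _ _ Hp Hk; lia.
Qed.

Lemma count_sub_in (T : eqType) (a b : pred T) (s : seq T) :
  {in s, forall x, a x -> b x} -> count a s <= count b s.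
Proof.
elim: s => //= x s IH H.
have H1 : count a s <= count b s by apply: IH => y Hy; apply: H; rewrite inE Hy orbT.
have := H x (mem_head _ _); case: (a x); case: (b x) => //= Hx; try lia.
Qed.

Lemma count_sub_eq (T : eqType) (a b : pred T) (s : seq T) :
  {in s, forall x, a x -> b x} -> count a s = count b s -> {in s, a =1 b}.
Proof.
elim: s => //= x s IH H Hc y.
have H1 : {in s, forall x, a x -> b x} by move=> z Hz; apply: H; rewrite inE Hz orbT.
have H2 := @count_sub_in _ _ _ _ H1.
have Hx := H x (mem_head _ _).
have Hab : a x = b x by move: Hx Hc H2; case: (a x); case: (b x) => //= Hx; try lia.
have Hcs : count a s = count b s by move: Hc; rewrite Hab; lia.
rewrite inE => /orP[/eqP -> //|Hy]; exact: IH.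
Qed.

Lemma Pk_sub lam mu i p : p \in Pk lam mu i -> p \in skewD lam mu.
Proof. by rewrite /Pk mem_Pof => /andP[/Uset_sub]. Qed.

Lemma cover lam mu p : p \in skewD lam mu -> exists j, p \in Pk lam mu j.+1.
Proof.
move=> Hp; have [j _ Hj] := @Uset_cover _ p (@skewD_pos lam mu) Hp.
by exists j.
Qed.

Lemma Tlm_iff lam mu i p : p \in skewD lam mu -> 0 < i ->
  ((Tlm lam mu p).1 == i) = (p \in Pk lam mu i).
Proof.
move=> Hp Hi; have [j Hj] := @cover _ _ _ Hp.
rewrite (@Tlm_eq lam mu j p Hj).
case: (eqVneq j.+1 i) => [<- //|Hne].
apply/esym/negP => H; have := @Pof_disj _ _ _ _ Hj H; move: Hne => /eqP; lia.
Qed.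

Lemma Tlm_pos lam mu p : p \in skewD lam mu -> 0 < (Tlm lam mu p).1.
Proof. move=> Hp; have [j Hj] := @cover _ _ _ Hp; by rewrite (@Tlm_eq lam mu j p Hj). Qed.

Lemma sub_level lam mu T i p : is_DP lam -> is_tableau (skewD lam mu) T ->
  (forall j, 0 < j < i -> forall q, q \in skewD lam mu ->
     ((T q).1 == j) = (q \in Pk lam mu j)) ->
  0 < i -> p \in skewD lam mu -> (T p).1 = i -> p \in Pk lam mu i.
Proof.
move=> Hl HT H Hi Hp Ti; have [m Hm] := @cover _ _ _ Hp.
have Hm0 : p \in Uset (skewD lam mu) m by move: Hm; rewrite /Pk mem_Pof => /andP[].
have Hlow := @key lam mu T Hl HT m p Hm0.
case: (ltngtP m.+1 i) => Hc.
- have := H m.+1 ltac:(lia) p Hp; rewrite Hm Ti => /eqP; lia.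
- lia.
- by rewrite -Hc.
Qed.

Lemma levels lam mu T : is_DP lam -> is_tableau (skewD lam mu) T ->
  forall i, (forall j, 0 < j < i ->
     content (skewD lam mu) T j = content (skewD lam mu) (Tlm lam mu) j) ->
  forall j, 0 < j < i -> forall q, q \in skewD lam mu ->
     ((T q).1 == j) = (q \in Pk lam mu j).
Proof.
move=> Hl HT; elim=> [|i IH] Hc j Hj; first lia.
have IH' := IH (fun j Hj => Hc j ltac:(lia)).
case: (ltnP j i) => Hji; first by apply: IH'; lia.
have -> : j = i by lia.
have Hi : 0 < i by lia.
apply: count_sub_eq.
- move=> q Hq /eqP Tq; exact: (@sub_level lam mu T i q Hl HT IH' Hi Hq Tq).
- have := Hc i ltac:(lia); rewrite /content => ->.
  apply: eq_in_count => q Hq; exact: Tlm_iff.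
Qed.

Theorem lemma3p4 (lam mu : seq nat) :
  is_DP lam -> is_DP mu -> {subset shD mu <= shD lam} ->
  (forall T : nat * nat -> letter,
     is_tableau (skewD lam mu) T -> amenable lam mu T ->
     lexle (content (skewD lam mu) T) (content (skewD lam mu) (Tlm lam mu))) /\
  (forall T : nat * nat -> letter,
     is_tableau (skewD lam mu) T -> amenable lam mu T ->
     (forall i, content (skewD lam mu) T i = content (skewD lam mu) (Tlm lam mu) i) ->
     forall i, 0 < i -> forall p, Tlevel (skewD lam mu) T i p = (p \in Pk lam mu i)).
Proof.
move=> Hl _ _; split.
- move=> T HT _.
  have [Hpos _ _ _ _] := HT.
  have c0 : content (skewD lam mu) T 0 = content (skewD lam mu) (Tlm lam mu) 0.
    rewrite /content !(@eq_in_count _ _ pred0) ?count_pred0 // => q Hq /=.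
      by have := @Tlm_pos _ _ _ Hq; lia.
    by have := Hpos q Hq; lia.
  case: (classic (forall i, 0 < i ->
     content (skewD lam mu) T i = content (skewD lam mu) (Tlm lam mu) i)) => Hall.
    left => i; case: i => [|i] //; exact: Hall.
  right.
  have Hex : exists i, (0 < i) && (content (skewD lam mu) T i != content (skewD lam mu) (Tlm lam mu) i).
    apply: NNPP => Hn; apply: Hall => i Hi; apply/eqP; apply: NNPP => Hne.
    by apply: Hn; exists i; rewrite Hi; apply/negP.
  case: (ex_minnP Hex) => i /andP[Hi Hne] Hmin.
  have Heq : forall j, 0 < j < i ->
      content (skewD lam mu) T j = content (skewD lam mu) (Tlm lam mu) j.
    move=> j /andP[j0 ji]; apply/eqP; apply: negbNE; apply/negP => H.
    have := Hmin j; rewrite j0 H => /(_ isT); lia.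
  exists i.-1; split.
    move=> j Hj; apply: Heq; lia.
  have -> : i.-1.+1 = i by lia.
  have Hle : content (skewD lam mu) T i <= content (skewD lam mu) (Tlm lam mu) i.
    rewrite /content; apply: count_sub_in => q Hq /eqP Tq.
    rewrite Tlm_iff //.
    exact: (@sub_level lam mu T i q Hl HT (@levels lam mu T Hl HT i Heq) Hi Hq Tq).
  by rewrite ltn_neqAle Hne Hle.
- move=> T HT _ Hc i Hi p; rewrite /Tlevel.
  case Hp: (p \in skewD lam mu) => /=.
    apply: (@levels lam mu T Hl HT i.+1 (fun j _ => Hc j) i) => //; by rewrite Hi ltnSn.
  by apply/esym/negP => /Pk_sub; rewrite Hp.
Qed.
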